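(* Suppose $m\ge n\ge 2$. If $P_1,\dots,P_\ell$ are deterministic perfect channels from $\{1,\dots,m\}$ to $\{1,\dots,n\}$ such that at least one column of $P_1+\cdots+P_\ell$ has no entry equal to $\ell$, then $\{P_1,\dots,P_\ell\}$ is not $\mathcal{I}$-minimized.
   Context: Channels from $\{1,\dots,m\}$ to $\{1,\dots,n\}$ are $m\times n$ row-stochastic matrices; $\mathcal{D}$ is the set of deterministic (0-1) channels, $\mathrm{rank}(D)$ the matrix rank. A deterministic perfect channel is a deterministic channel of rank $\min(m,n)$. For a channel $W$, $\Lambda(W)=\{\lambda\text{ probability distribution on }\mathcal{D}: W=\sum_D\lambda_DD\}$, $C_{11}(\lambda)=\sum_D\lambda_D\log_2\mathrm{rank}(D)$, $\underline{C}_{11}(W)=\inf_{\lambda\in\Lambda(W)}C_{11}(\lambda)$. A subset $S\subseteq\mathcal{D}$ is $\mathcal{I}$-minimized if there is a probability distribution $\lambda$ on $\mathcal{D}$ with $\mathrm{supp}(\lambda)=S$ and $C_{11}(\lambda)=\underline{C}_{11}(W)$ where $W=\sum_D\lambda_DD$. *)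

(* Defs.v *)
From HB Require Import structures.
From mathcomp Require Import all_boot all_order all_algebra.
From mathcomp Require Import classical_sets reals exp.
Set Implicit Arguments. Unset Strict Implicit. Unset Printing Implicit Defensive.
Import Order.TTheory GRing.Theory Num.Theory.
Local Open Scope ring_scope.

(* Deterministic (0-1 row-stochastic) m x n channels are in bijection with
   maps 'I_m -> 'I_n : row i has its unique 1 in column f i. *)
Definition detch (m n : nat) := {ffun 'I_m -> 'I_n}.

Definition dmx {R : realType} {m n : nat} (f : detch m n) : 'M[R]_(m, n) :=
  \matrix_(i < m, j < n) (f i == j)%:R.

Definition log2 {R : realType} (x : R) : R := ln x / ln 2.

Definition is_distr {R : realType} {m n : nat} (lam : {ffun detch m n -> R}) :=
  (forall D, 0 <= lam D) /\ \sum_D lam D = 1.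

Definition mix {R : realType} {m n : nat} (lam : {ffun detch m n -> R}) : 'M[R]_(m, n) :=
  \sum_D lam D *: dmx D.

Definition Lambda {R : realType} {m n : nat} (W : 'M[R]_(m, n)) :
  set {ffun detch m n -> R} :=
  [set lam | is_distr lam /\ W = mix lam].

Definition C11 {R : realType} {m n : nat} (lam : {ffun detch m n -> R}) : R :=
  \sum_D lam D * log2 ((\rank (@dmx R m n D))%:R).

Definition uC11 {R : realType} {m n : nat} (W : 'M[R]_(m, n)) : R :=
  inf [set C11 lam | lam in Lambda W].

Definition supp {R : realType} {m n : nat} (lam : {ffun detch m n -> R}) :
  {set detch m n} := [set D | lam D != 0].

Definition I_minimized (R : realType) {m n : nat} (S : {set detch m n}) : Prop :=
  exists lam : {ffun detch m n -> R},
    [/\ is_distr lam, supp lam = S & C11 lam = uC11 (mix lam)].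

Definition perfect (R : realType) {m n : nat} (D : detch m n) : Prop :=
  \rank (@dmx R m n D) = minn m n.

(* Main.v *)
Require Import Defs.
From HB Require Import structures.
From mathcomp Require Import all_boot all_order all_algebra.
From mathcomp Require Import classical_sets reals exp.
Import Order.TTheory GRing.Theory Num.Theory.
Local Open Scope ring_scope.

Lemma ln2_gt0 (R : realType) : 0 < ln (2 : R).
Proof. by apply: ln_gt0; rewrite ltr1n. Qed.

Lemma log2_le (R : realType) (r s : nat) : (r <= s)%N ->
  log2 (r%:R : R) <= log2 (s%:R : R).
Proof.
move=> rs; rewrite /log2 ler_pM2r ?invr_gt0 ?ln2_gt0 //.
case: r rs => [|r] rs.
  rewrite ln0 //; case: s rs => [|s] _; first by rewrite ln0.
  by apply: ln_ge0; rewrite ler1n.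
by rewrite ler_ln ?posrE ?ltr0n ?ler_nat // (leq_trans _ rs).
Qed.

Lemma log2_lt (R : realType) (r s : nat) : (r < s)%N -> (2 <= s)%N ->
  log2 (r%:R : R) < log2 (s%:R : R).
Proof.
move=> rs s2; rewrite /log2 ltr_pM2r ?invr_gt0 ?ln2_gt0 //.
case: r rs => [|r] rs.
  by rewrite ln0 // ln_gt0 // ltr1n.
by rewrite ltr_ln ?posrE ?ltr0n ?ltr_nat // (leq_trans _ rs).
Qed.

Lemma log2_ge0 (R : realType) (r : nat) : 0 <= log2 (r%:R : R).
Proof.
have := @log2_le R 0 r (leq0n r).
by rewrite /log2 ln0 // mul0r.
Qed.

Lemma rank_avoid (R : realType) (m n : nat) (f : detch m n) (j : 'I_n) :
  (forall i, f i != j) -> (\rank (@dmx R m n f) <= n.-1)%N.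
Proof.
move=> Hf.
pose A : 'M[R]_(m, n.-1) := \matrix_(i, k) (f i == lift j k)%:R.
pose B : 'M[R]_(n.-1, n) := \matrix_(k, c) (lift j k == c)%:R.
have -> : dmx f = A *m B.
  apply/matrixP => i c; rewrite !mxE.
  under eq_bigr do rewrite /A /B !mxE.
  move: (Hf i); case: (unliftP j (f i)) => [k0 ->|->]; last by rewrite eqxx.
  move=> _; rewrite (bigD1 k0) //= eqxx mul1r big1 ?addr0 //.
  by move=> k nk; rewrite (inj_eq (@lift_inj _ j)) eq_sym (negbTE nk) mul0r.
exact: leq_trans (mxrankM_maxr _ _) (rank_leq_row _).
Qed.

Theorem proposition5 (R : realType) (m n : nat) (hnm : (n <= m)%N) (hn : (2 <= n)%N)
  (l : nat) (P : 'I_l -> detch m n) :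
  (forall k, perfect R (P k)) ->
  (exists j : 'I_n, forall i : 'I_m, (\sum_(k < l) @dmx R m n (P k)) i j != l%:R) ->
  ~ I_minimized R [set P k | k : 'I_l].
Proof.
move=> Hperf [j Hj] [lam [[lam_ge0 lam_sum] Hsupp HC]].
set W := mix lam.
have HW : forall i c, W i c = \sum_D lam D * (D i == c)%:R.
  by move=> i c; rewrite /W /mix summxE; apply: eq_bigr => D _; rewrite !mxE.
have W_ge0 : forall i c, 0 <= W i c.
  by move=> i c; rewrite HW sumr_ge0 // => D _; rewrite mulr_ge0.
have Hrow : forall i, \sum_c W i c = 1.
  move=> i; under eq_bigr do rewrite HW.
  rewrite exchange_big /=; rewrite -[RHS]lam_sum; apply: eq_bigr => D _.
  have S1 : \sum_c ((D i == c)%:R : R) = 1.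
    rewrite (bigD1 (D i)) //= eqxx big1 ?addr0 // => c.
    by rewrite eq_sym => /negbTE ->.
  by rewrite -mulr_sumr S1 mulr1.
have Hk : forall i, exists k, P k i != j.
  move=> i; apply/existsP; apply: contraR (Hj i) => /existsPn H.
  rewrite summxE -[l in l%:R]card_ord -sumr_const; apply/eqP/eq_bigr => k _.
  by rewrite mxE; move/negPn: (H k) => ->.
have lam_pos : forall k, 0 < lam (P k).
  move=> k; have : P k \in supp lam by rewrite Hsupp; apply/imsetP; exists k.
  by rewrite inE lt_def => ->; rewrite lam_ge0.
have HC1 : C11 lam = log2 (n%:R : R).
  rewrite /C11 -[RHS]mul1r -lam_sum mulr_suml; apply: eq_bigr => D _.
  have [->|nz] := eqVneq (lam D) 0; first by rewrite !mul0r.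
  have : D \in supp lam by rewrite inE.
  rewrite Hsupp => /imsetP [k _ ->]; rewrite Hperf.
  by rewrite (minn_idPr hnm).
have [k Hk'] := fin_all_exists Hk.
pose f0 : detch m n := [ffun i => P (k i) i].
pose lam' : {ffun detch m n -> R} := [ffun f : detch m n => \prod_i W i (f i)].
have lam'_ge0 : forall f, 0 <= lam' f.
  by move=> f; rewrite ffunE prodr_ge0.
have lam'_sum : \sum_f lam' f = 1.
  under eq_bigr do rewrite ffunE.
  rewrite -(bigA_distr_bigA (fun i c => W i c)) /=.
  by rewrite big1 // => i _; rewrite Hrow.
have lam'_mix : W = mix lam'.
  apply/matrixP => a b; rewrite [in RHS]/mix [in RHS]summxE.
  pose F i c := W i c * (if i == a then (c == b)%:R else 1).
  transitivity (\sum_(f : detch m n) \prod_i F i (f i)).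
    rewrite -(bigA_distr_bigA F) /=.
    rewrite [in RHS](bigD1 a) //=.
    rewrite [X in _ = _ * X]big1 ?mulr1.
      have Hab : \sum_c F a c = W a b.
        rewrite /F eqxx (bigD1 b) //= eqxx mulr1 big1 ?addr0 // => c.
        by move/negbTE => ->; rewrite mulr0.
      by rewrite Hab.
    move=> i /negbTE ia; rewrite /F ia.
    by under eq_bigr do rewrite mulr1; rewrite Hrow.
  apply: eq_bigr => f _; rewrite !mxE ffunE /F big_split /=.
  congr (_ * _); rewrite (bigD1 a) //= eqxx big1 ?mulr1 //.
  by move=> i /negbTE ->.
have f0_pos : 0 < lam' f0.
  rewrite ffunE prodr_gt0 // => i _; rewrite ffunE HW.
  rewrite (bigD1 (P (k i))) //= eqxx mulr1.
  apply: (lt_le_trans (lam_pos (k i))); rewrite lerDl sumr_ge0 // => D _.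
  by rewrite mulr_ge0.
have rk_le : forall f : detch m n, log2 ((\rank (@dmx R m n f))%:R : R) <= log2 (n%:R : R).
  by move=> f; apply: log2_le; apply: rank_leq_col.
have rk_f0 : log2 ((\rank (@dmx R m n f0))%:R : R) < log2 (n%:R : R).
  have H0 : (\rank (@dmx R m n f0) <= n.-1)%N.
    by apply: rank_avoid => i; rewrite ffunE.
  apply: log2_lt => //.
  by rewrite (leq_ltn_trans H0) // ltn_predL (leq_trans _ hn).
have HC2 : C11 lam' < log2 (n%:R : R).
  rewrite -subr_gt0.
  have -> : log2 (n%:R : R) - C11 lam' =
    \sum_f lam' f * (log2 (n%:R : R) - log2 ((\rank (@dmx R m n f))%:R)).
    have Hn : log2 (n%:R : R) = \sum_f lam' f * log2 (n%:R : R).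
      by rewrite -mulr_suml lam'_sum mul1r.
    rewrite {1}Hn /C11 -sumrB.
    by apply: eq_bigr => f _; rewrite mulrBr.
  rewrite (bigD1 f0) //=.
  have Hp : 0 < lam' f0 * (log2 (n%:R : R) - log2 ((\rank (@dmx R m n f0))%:R)).
    by rewrite mulr_gt0 // subr_gt0.
  apply: (lt_le_trans Hp).
  rewrite lerDl sumr_ge0 // => f _; rewrite mulr_ge0 // subr_ge0.
  exact: rk_le.
have Hlb : has_lbound [set C11 lam0 | lam0 in Lambda W].
  exists 0 => y [lam2 [[l2_ge0 _] _] <-].
  by rewrite sumr_ge0 // => D _; rewrite mulr_ge0 // log2_ge0.
have Hinf : uC11 W <= C11 lam'.
  by rewrite /uC11; apply: (ge_inf Hlb); exists lam'.
have : log2 (n%:R : R) < log2 (n%:R : R).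
  by rewrite -{1}HC1 HC -/W; apply: le_lt_trans Hinf HC2.
by rewrite ltxx.
Qed.
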